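(* Let $\mathcal{T}$ be the set of 9-tuples $(G_1,G_2,G_3,V_{1,2},V_{1,3},V_{2,1},V_{2,3},V_{3,1},V_{3,2})$ of monic polynomials satisfying $(V_{i,j},V_{k,l})=1$ whenever both $i\ne k$ and $j\ne l$. Then the map sending such a tuple to $$A_1=G_1V_{1,2}V_{1,3},\ A_2=G_2V_{2,1}V_{2,3},\ A_3=G_3V_{3,1}V_{3,2},\quad B_1=G_1V_{2,1}V_{3,1},\ B_2=G_2V_{1,2}V_{3,2},\ B_3=G_3V_{1,3}V_{2,3}$$ is a bijection from $\mathcal{T}$ onto the set of 6-tuples $(A_1,A_2,A_3,B_1,B_2,B_3)$ of monic polynomials satisfying $A_1A_2A_3=B_1B_2B_3$. (In particular every such 6-tuple arises this way, with $G_i=(A_i,B_i)$.)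
   Context: Polynomials are in $\mathbb{F}_q[T]$ with $q$ a prime power; $(A,B)$ denotes the monic greatest common divisor. *)

(* Defs.v *)
From HB Require Import structures.
From mathcomp Require Import all_boot all_order all_algebra all_field.
Set Implicit Arguments. Unset Strict Implicit. Unset Printing Implicit Defensive.
Import GRing.Theory.
Local Open Scope ring_scope.

Record T9 (F : finFieldType) := mkT9 {
  G1 : {poly F}; G2 : {poly F}; G3 : {poly F};
  V12 : {poly F}; V13 : {poly F}; V21 : {poly F};
  V23 : {poly F}; V31 : {poly F}; V32 : {poly F} }.

Record T6 (F : finFieldType) := mkT6 {
  A1 : {poly F}; A2 : {poly F}; A3 : {poly F};
  B1 : {poly F}; B2 : {poly F}; B3 : {poly F} }.

(* V_{i,j} for indices i <> j in {1,2,3}; other values are never used. *)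
Definition Vof (F : finFieldType) (t : T9 F) (i j : nat) : {poly F} :=
  match i, j with
  | 1, 2 => V12 t | 1, 3 => V13 t
  | 2, 1 => V21 t | 2, 3 => V23 t
  | 3, 1 => V31 t | 3, 2 => V32 t
  | _, _ => 0
  end.

Definition idx3 : seq nat := [:: 1%N; 2%N; 3%N].

Definition inT (F : finFieldType) (t : T9 F) : Prop :=
  [/\ G1 t \is monic, G2 t \is monic, G3 t \is monic,
      (V12 t \is monic) && (V13 t \is monic) && (V21 t \is monic) &&
      (V23 t \is monic) && (V31 t \is monic) && (V32 t \is monic)
    & forall i j k l : nat, i \in idx3 -> j \in idx3 -> k \in idx3 -> l \in idx3 ->
        i != j -> k != l -> i != k -> j != l ->
        coprimep (Vof t i j) (Vof t k l)].

Definition inS (F : finFieldType) (s : T6 F) : Prop :=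
  [/\ (A1 s \is monic) && (A2 s \is monic) && (A3 s \is monic),
      (B1 s \is monic) && (B2 s \is monic) && (B3 s \is monic)
    & A1 s * A2 s * A3 s = B1 s * B2 s * B3 s].

Definition phi (F : finFieldType) (t : T9 F) : T6 F :=
  mkT6 (G1 t * V12 t * V13 t) (G2 t * V21 t * V23 t) (G3 t * V31 t * V32 t)
       (G1 t * V21 t * V31 t) (G2 t * V12 t * V32 t) (G3 t * V13 t * V23 t).

(* Main.v *)
Require Import Defs.
From HB Require Import structures.
From mathcomp Require Import all_boot all_order all_algebra all_field.
Import GRing.Theory.
From mathcomp Require Import ring.
Set Implicit Arguments. Unset Strict Implicit. Unset Printing Implicit Defensive.
Local Open Scope ring_scope.

Lemma gcd_cof (R : fieldType) (G x y : {poly R}) :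
  coprimep x y -> gcdp (G * x) (G * y) %= G.
Proof.
move=> cxy; rewrite -(eqp_ltrans (mulp_gcdr x y G)).
rewrite -{2}(mulr1 G); apply: eqp_mull; by rewrite gcdp_eqp1.
Qed.

Lemma monic_div (R : fieldType) (p d : {poly R}) :
  p \is monic -> d \is monic -> d %| p -> p %/ d \is monic.
Proof. by move=> mp md dp; rewrite -(divpK dp) monicMr in mp. Qed.

Lemma split_gcd (R : fieldType) (A B : {poly R}) :
  A \is monic -> B \is monic ->
  exists G a b, [/\ (G \is monic) && (a \is monic) && (b \is monic),
     A = G * a, B = G * b, coprimep a b & G %= gcdp A B].
Proof.
move=> mA mB.
have g0 : gcdp A B != 0 by rewrite gcdp_eq0 negb_and monic_neq0.
have lc0 : lead_coef (gcdp A B) != 0 by rewrite lead_coef_eq0.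
set G := (lead_coef (gcdp A B))^-1 *: gcdp A B.
have mG : G \is monic by apply/monicP; rewrite lead_coefZ mulVf.
have eG : G %= gcdp A B by apply: eqp_scale; rewrite invr_eq0.
have GA : G %| A by rewrite (eqp_dvdl _ eG) dvdp_gcdl.
have GB : G %| B by rewrite (eqp_dvdl _ eG) dvdp_gcdr.
have G0 : G != 0 by apply: monic_neq0.
exists G, (A %/ G), (B %/ G); split => //.
- by rewrite mG !monic_div.
- by rewrite divpKC.
- by rewrite divpKC.
apply/coprimepP => d da db.
have : d * G %| G.
  rewrite (eqp_dvdr _ eG) dvdp_gcd; apply/andP; split.
    by rewrite -{1}(divpK GA) dvdp_mul2r.
  by rewrite -{1}(divpK GB) dvdp_mul2r.
rewrite -{2}(mul1r G) dvdp_mul2r // dvdp1 size_poly_eq1; done.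
Qed.

Lemma cop_of (R : fieldType) (a b x y : {poly R}) :
  coprimep a b -> x %| a -> y %| b -> coprimep x y.
Proof.
move=> c xa yb; apply: (coprimep_dvdr xa); exact: (coprimep_dvdl yb).
Qed.

Lemma core (R : fieldType) (a1 a2 a3 b1 b2 b3 : {poly R}) :
  a1 \is monic -> a2 \is monic -> a3 \is monic ->
  b1 \is monic -> b2 \is monic -> b3 \is monic ->
  coprimep a1 b1 -> coprimep a2 b2 -> coprimep a3 b3 ->
  a1 * a2 * a3 = b1 * b2 * b3 ->
  exists v12 v13 v21 v23 v31 v32 : {poly R},
    [/\ (v12 \is monic) && (v13 \is monic) && (v21 \is monic) &&
        (v23 \is monic) && (v31 \is monic) && (v32 \is monic),
     a1 = v12 * v13, a2 = v21 * v23,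
     a3 = v31 * v32 & [/\ b1 = v21 * v31, b2 = v12 * v32 & b3 = v13 * v23]].
Proof.
move=> ma1 ma2 ma3 mb1 mb2 mb3 c1 c2 c3 E.
have [g [x [y [/andP[/andP[mg mx] my] ea1 eb2 cxy _]]]] := split_gcd ma1 mb2.
have g0 : g != 0 by apply: monic_neq0.
have x0 : x != 0 by apply: monic_neq0.
have y0 : y != 0 by apply: monic_neq0.
have a1d : a1 %| b2 * b3.
  by rewrite -(Gauss_dvdpr _ c1) mulrA -E -mulrA dvdp_mulIl.
have xb3 : x %| b3.
  rewrite -(Gauss_dvdpr _ cxy) -(dvdp_mul2l _ _ g0) mulrA -ea1 -eb2 //.
have b2d : b2 %| a1 * a3.
  have c2' : coprimep b2 a2 by rewrite coprimep_sym.
  by rewrite -(Gauss_dvdpr _ c2') mulrCA mulrA E; apply: dvdp_mulr; apply: dvdp_mulIr.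
have ya3 : y %| a3.
  have cyx : coprimep y x by rewrite coprimep_sym.
  by rewrite -(Gauss_dvdpr _ cyx) -(dvdp_mul2l _ _ g0) mulrA -ea1 -eb2.
set e := b3 %/ x. set d := a3 %/ y.
have eb3 : b3 = x * e by rewrite divpKC.
have ea3 : a3 = d * y by rewrite divpK.
have me : e \is monic by apply: monic_div.
have md : d \is monic by apply: monic_div.
have e0 : e != 0 by apply: monic_neq0.
have E2 : (a2 * d) * (g * x * y) = (b1 * e) * (g * x * y).
  have -> : (a2 * d) * (g * x * y) = a1 * a2 * a3 by rewrite ea1 ea3; ring.
  by rewrite E eb2 eb3; ring.
have {}E2 := mulIf (mulf_neq0 (mulf_neq0 g0 x0) y0) E2.
have cde : coprimep e d.
  apply: (cop_of (a := b3) (b := a3)); first by rewrite coprimep_sym.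
  - by rewrite eb3 dvdp_mulIr.
  - by rewrite ea3 dvdp_mulIl.
have ea2d : e %| a2 by rewrite -(Gauss_dvdpl _ cde) E2 dvdp_mulIr.
set f := a2 %/ e.
have ea2 : a2 = f * e by rewrite divpK.
have mf : f \is monic by apply: monic_div.
have eb1 : b1 = f * d.
  apply: (mulIf e0); by rewrite -E2 ea2; ring.
exists g, x, f, e, d, y; split => //.
by rewrite mg mx mf me md my.
Qed.

Lemma cop_of' (R : fieldType) (a b x y : {poly R}) :
  coprimep a b -> x %| b -> y %| a -> coprimep x y.
Proof. by move=> c xb ya; apply: (cop_of _ xb ya); rewrite coprimep_sym. Qed.

Lemma uniq_split (R : fieldType) (g g' x y x' y' : {poly R}) :
  g \is monic -> g' \is monic -> coprimep x y -> coprimep x' y' ->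
  g * x = g' * x' -> g * y = g' * y' -> [/\ g = g', x = x' & y = y'].
Proof.
move=> mg mg' c c' ex ey.
have e : g = g'.
  apply/eqP; rewrite -eqp_monic //.
  have h1 := gcd_cof g c. have h2 := gcd_cof g' c'.
  rewrite ex ey in h1.
  by rewrite -(eqp_ltrans h1) h2.
subst g'; have g0 : g != 0 by apply: monic_neq0.
by split => //; apply: (mulfI g0).
Qed.

Ltac fin := repeat match goal with H : ?x = _ * _ |- context [?x] => is_var x; rewrite H end;
  by rewrite ?dvdp_mulIl ?dvdp_mulIr.

Theorem lemma7p3 (F : finFieldType) :
  [/\ (forall t : T9 F, inT t -> inS (phi t)),
      (forall t t' : T9 F, inT t -> inT t' -> phi t = phi t' -> t = t')
    & (forall s : T6 F, inS s ->
         exists t : T9 F, [/\ inT t, phi t = s,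
           G1 t %= gcdp (A1 s) (B1 s), G2 t %= gcdp (A2 s) (B2 s)
           & G3 t %= gcdp (A3 s) (B3 s)])].
Proof.
split.
- move=> [g1 g2 g3 v12 v13 v21 v23 v31 v32].
  move=> [m1 m2 m3 /andP[/andP[/andP[/andP[/andP[n12 n13] n21] n23] n31] n32] _].
  rewrite /inS /phi /=; split.
  + by rewrite !monicMr ?m1 ?m2 ?m3.
  + by rewrite !monicMr ?m1 ?m2 ?m3.
  + ring.
- move=> [g1 g2 g3 v12 v13 v21 v23 v31 v32] [g1' g2' g3' v12' v13' v21' v23' v31' v32'].
  move=> [m1 m2 m3 /andP[/andP[/andP[/andP[/andP[n12 n13] n21] n23] n31] n32] H].
  move=> [m1' m2' m3' /andP[/andP[/andP[/andP[/andP[n12' n13'] n21'] n23'] n31'] n32'] H'].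
  rewrite /phi /= => -[e1 e2 e3 e4 e5 e6].
  have C1 : coprimep (v12 * v13) (v21 * v31).
    by rewrite coprimepMl !coprimepMr (H 1 2 2 1)%N ?(H 1 2 3 1)%N ?(H 1 3 2 1)%N ?(H 1 3 3 1)%N.
  have C1' : coprimep (v12' * v13') (v21' * v31').
    by rewrite coprimepMl !coprimepMr (H' 1 2 2 1)%N ?(H' 1 2 3 1)%N ?(H' 1 3 2 1)%N ?(H' 1 3 3 1)%N.
  have C2 : coprimep (v21 * v23) (v12 * v32).
    by rewrite coprimepMl !coprimepMr (H 2 1 1 2)%N ?(H 2 1 3 2)%N ?(H 2 3 1 2)%N ?(H 2 3 3 2)%N.
  have C2' : coprimep (v21' * v23') (v12' * v32').
    by rewrite coprimepMl !coprimepMr (H' 2 1 1 2)%N ?(H' 2 1 3 2)%N ?(H' 2 3 1 2)%N ?(H' 2 3 3 2)%N.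
  have C3 : coprimep (v31 * v32) (v13 * v23).
    by rewrite coprimepMl !coprimepMr (H 3 1 1 3)%N ?(H 3 1 2 3)%N ?(H 3 2 1 3)%N ?(H 3 2 2 3)%N.
  have C3' : coprimep (v31' * v32') (v13' * v23').
    by rewrite coprimepMl !coprimepMr (H' 3 1 1 3)%N ?(H' 3 1 2 3)%N ?(H' 3 2 1 3)%N ?(H' 3 2 2 3)%N.
  have C4 : coprimep v13 v32 by apply: (H 1 3 3 2)%N.
  have C4' : coprimep v13' v32' by apply: (H' 1 3 3 2)%N.
  rewrite /= in m1 m2 m3 n12 n13 n21 n23 n31 n32 m1' m2' m3' n12' n13' n21' n23' n31' n32'.
  rewrite -!mulrA in e1 e2 e3 e4 e5 e6.
  have [eg1 ea1 eb1] := uniq_split m1 m1' C1 C1' e1 e4.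
  have [eg2 ea2 eb2] := uniq_split m2 m2' C2 C2' e2 e5.
  have [eg3 ea3 eb3] := uniq_split m3 m3' C3 C3' e3 e6.
  have [e12 e13 e32] := uniq_split n12 n12' C4 C4' ea1 eb2.
  subst g1' g2' g3' v12' v13' v32'.
  have e23 : v23 = v23' by apply: (mulfI (monic_neq0 n13)).
  have e31 : v31 = v31' by apply: (mulIf (monic_neq0 n32)).
  subst v23' v31'.
  have e21 : v21 = v21' by apply: (mulIf (monic_neq0 n23)).
  by subst v21'.
- move=> [a1 a2 a3 b1 b2 b3] [/andP[/andP[ma1 ma2] ma3] /andP[/andP[mb1 mb2] mb3] /= E].
  rewrite /= in ma1 ma2 ma3 mb1 mb2 mb3.
  have [g1 [x1 [y1 [/andP[/andP[mg1 mx1] my1] ea1 eb1 c1 eg1]]]] := split_gcd ma1 mb1.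
  have [g2 [x2 [y2 [/andP[/andP[mg2 mx2] my2] ea2 eb2 c2 eg2]]]] := split_gcd ma2 mb2.
  have [g3 [x3 [y3 [/andP[/andP[mg3 mx3] my3] ea3 eb3 c3 eg3]]]] := split_gcd ma3 mb3.
  have G0 : g1 * g2 * g3 != 0.
    by rewrite !mulf_neq0 // monic_neq0.
  have E' : x1 * x2 * x3 = y1 * y2 * y3.
    apply: (mulfI G0); transitivity (a1 * a2 * a3).
      by rewrite ea1 ea2 ea3; ring.
    by rewrite E eb1 eb2 eb3; ring.
  have [v12 [v13 [v21 [v23 [v31 [v32 [mv ex1 ex2 ex3 [ey1 ey2 ey3]]]]]]]] :=
    core mx1 mx2 mx3 my1 my2 my3 c1 c2 c3 E'.
  exists (mkT9 g1 g2 g3 v12 v13 v21 v23 v31 v32); split => //=.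
    { split => //= i j k l.
    rewrite !inE => /or3P[]/eqP-> /or3P[]/eqP-> /or3P[]/eqP-> /or3P[]/eqP-> //= _ _ _ _.
    all: first [ solve [apply: (cop_of c1); fin] | solve [apply: (cop_of c2); fin]
               | solve [apply: (cop_of c3); fin] | solve [apply: (cop_of' c1); fin]
               | solve [apply: (cop_of' c2); fin] | solve [apply: (cop_of' c3); fin] ]. }
  rewrite /phi /= ea1 ea2 ea3 eb1 eb2 eb3 ex1 ex2 ex3 ey1 ey2 ey3.
  congr mkT6; ring.
Qed.
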